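(* Let $a,b,P_{\max}>0$ and set $\theta=b+b^2P_{\max}$. Define $$Q_{sym}=\frac{\Re\!\left(\sqrt{(a-\theta)(a-\theta+a^2P_{\max})}\right)-\theta}{ab}.$$ If $b\ge \sqrt{1+aP_{\max}}/P_{\max}$, then $Q_{sym}\le 0$. Consequently, in the symmetric two-user channel ($c=a$, $d=b$), both frontier curves $\Phi_1$ and $\Phi_2$ are convex.
   Context: This is the symmetric two-user interference channel with interference treated as noise. The rates are $R_1=\log_2(1+\frac{aP_1}{1+bP_2})$ and $R_2=\log_2(1+\frac{aP_2}{1+bP_1})$, with $P_i\in[0,P_{\max}]$. $\Phi_2$ is the curve of rate pairs with $P_2=P_{\max}$ and $P_1\in[0,P_{\max}]$; $\Phi_1$ is the curve with $P_1=P_{\max}$ and $P_2\in[0,P_{\max}]$. The second derivative of $\Phi_2$ (as $r_2$ versus $r_1$) has the sign of $P_1-Q_{sym}$, and by symmetry the same holds for $\Phi_1$ with $P_2$ in place of $P_1$. $\Re$ denotes the real part. *)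

(* Defs.v *)
From Stdlib Require Import Reals.
Open Scope R_scope.

Definition log2 (x : R) : R := ln x / ln 2.

(* Rates of the symmetric two-user interference channel (c = a, d = b),
   interference treated as noise. *)
Definition rate1 (a b P1 P2 : R) : R := log2 (1 + a * P1 / (1 + b * P2)).
Definition rate2 (a b P1 P2 : R) : R := log2 (1 + a * P2 / (1 + b * P1)).

(* Real part of the principal complex square root of a real number x:
   sqrt x if x >= 0, and 0 if x < 0 (purely imaginary root). *)
Definition re_csqrt (x : R) : R := if Rle_dec 0 x then sqrt x else 0.

Definition theta (b Pmax : R) : R := b + b ^ 2 * Pmax.

Definition Qsym (a b Pmax : R) : R :=
  (re_csqrt ((a - theta b Pmax) * (a - theta b Pmax + a ^ 2 * Pmax))
     - theta b Pmax) / (a * b).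

(* A parametric curve t |-> (x t, y t), t in [0, Pmax], viewed as the graph
   of r2 as a function of r1, is convex: whenever the abscissa of the point
   at parameter s is the convex combination (weight l) of the abscissae at
   parameters p and q, its ordinate lies below the chord. *)
Definition convex_curve (x y : R -> R) (Pmax : R) : Prop :=
  forall p q s l : R,
    0 <= p <= Pmax -> 0 <= q <= Pmax -> 0 <= s <= Pmax -> 0 <= l <= 1 ->
    x s = l * x p + (1 - l) * x q ->
    y s <= l * y p + (1 - l) * y q.

Definition Phi2_convex (a b Pmax : R) : Prop :=
  convex_curve (fun P1 => rate1 a b P1 Pmax) (fun P1 => rate2 a b P1 Pmax) Pmax.

Definition Phi1_convex (a b Pmax : R) : Prop :=
  convex_curve (fun P2 => rate1 a b Pmax P2) (fun P2 => rate2 a b Pmax P2) Pmax.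

(* Main.v *)
Require Import Defs.
From Stdlib Require Import Reals Lra.
From Coquelicot Require Import Coquelicot.
Open Scope R_scope.

Definition cc (a b P : R) := b * (1 + b * P) / a.
Definition Gf (a b P u : R) :=
  ln (1 - cc a b P + a * P + cc a b P * exp u) - ln (1 - cc a b P + cc a b P * exp u).
Definition dG (a b P u : R) :=
  cc a b P * exp u / (1 - cc a b P + a * P + cc a b P * exp u)
  - cc a b P * exp u / (1 - cc a b P + cc a b P * exp u).

Lemma ln_le' x y : 0 < x -> x <= y -> ln x <= ln y.
Proof. intros Hx [H|H]. left; apply ln_increasing; auto. subst; lra. Qed.

Lemma exp_ge1 u : 0 <= u -> 1 <= exp u.
Proof. intros; pose proof (exp_ineq1_le u); lra. Qed.

Lemma alg_mono s1 s2 al D : 1 <= s1 <= s2 -> al <= 0 -> 0 < D ->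
  (s1 - al) / (s1 + D) - (s1 - al) / s1 <= (s2 - al) / (s2 + D) - (s2 - al) / s2.
Proof.
  intros Hs Hal HD.
  assert (E : (s2 - al) / (s2 + D) - (s2 - al) / s2 - ((s1 - al) / (s1 + D) - (s1 - al) / s1)
     = D * (s2 - s1) * (s1 * s2 - al * (s1 + s2) - al * D) * / (s1 * s2 * (s1 + D) * (s2 + D))).
  { field; repeat split; lra. }
  assert (0 <= D * (s2 - s1) * (s1 * s2 - al * (s1 + s2) - al * D) * / (s1 * s2 * (s1 + D) * (s2 + D))).
  { apply Rmult_le_pos. apply Rmult_le_pos. apply Rmult_le_pos; lra. nra.
    left; apply Rinv_0_lt_compat. repeat apply Rmult_lt_0_compat; lra. }
  lra.
Qed.

Section S.
Variables a b P : R.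
Hypothesis Ha : 0 < a.
Hypothesis Hb : 0 < b.
Hypothesis HP : 0 < P.
Hypothesis Hc : 1 <= cc a b P.

Lemma s_ge1 u : 0 <= u -> 1 <= 1 - cc a b P + cc a b P * exp u.
Proof. intros Hu; pose proof (exp_ge1 u Hu). nra. Qed.

Lemma Gf_deriv u : 0 <= u -> derivable_pt_lim (Gf a b P) u (dG a b P u).
Proof.
  intros Hu. pose proof (s_ge1 u Hu). assert (0 < a * P) by nra.
  apply is_derive_Reals. unfold Gf, dG.
  auto_derive.
  - split; [lra | split; [lra | auto]].
  - field; lra.
Qed.

Lemma dG_mono u1 u2 : 0 <= u1 -> u1 <= u2 -> dG a b P u1 <= dG a b P u2.
Proof.
  intros H1 H12. pose proof (s_ge1 u1 H1). pose proof (s_ge1 u2 ltac:(lra)).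
  assert (exp u1 <= exp u2) by (destruct H12 as [H9|H9]; [left; apply exp_increasing; auto | subst; lra]).
  unfold dG.
  set (c := cc a b P) in *.
  pose proof (alg_mono (1 - c + c * exp u1) (1 - c + c * exp u2) (1 - c) (a * P)
    ltac:(split; [lra| nra]) ltac:(lra) ltac:(nra)).
  replace (c * exp u1) with ((1 - c + c * exp u1) - (1 - c)) by ring.
  replace (c * exp u2) with ((1 - c + c * exp u2) - (1 - c)) by ring.
  replace (1 - c + a * P + (1 - c + c * exp u1 - (1 - c))) with ((1 - c + c * exp u1) + a * P) by ring.
  replace (1 - c + a * P + (1 - c + c * exp u2 - (1 - c))) with ((1 - c + c * exp u2) + a * P) by ring.
  replace (1 - c + (1 - c + c * exp u1 - (1 - c))) with (1 - c + c * exp u1) by ring.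
  replace (1 - c + (1 - c + c * exp u2 - (1 - c))) with (1 - c + c * exp u2) by ring.
  assumption.
Qed.

Lemma Gf_core u v l : 0 <= u -> u < v -> 0 < l < 1 ->
  Gf a b P (l * u + (1 - l) * v) <= l * Gf a b P u + (1 - l) * Gf a b P v.
Proof.
  intros Hu Huv Hl. set (z := l * u + (1 - l) * v).
  assert (u < z) by (unfold z; nra). assert (z < v) by (unfold z; nra).
  destruct (MVT_cor2 (Gf a b P) (dG a b P) u z H) as [c1 [E1 H1]].
  { intros; apply Gf_deriv; lra. }
  destruct (MVT_cor2 (Gf a b P) (dG a b P) z v H0) as [c2 [E2 H2]].
  { intros; apply Gf_deriv; lra. }
  pose proof (dG_mono c1 c2 ltac:(lra) ltac:(lra)).
  assert (Ez1 : z - u = (1 - l) * (v - u)) by (unfold z; ring).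
  assert (Ez2 : v - z = l * (v - u)) by (unfold z; ring).
  assert (l * Gf a b P u + (1 - l) * Gf a b P v - Gf a b P z
          = l * (1 - l) * (v - u) * (dG a b P c2 - dG a b P c1)).
  { rewrite Ez1 in E1. rewrite Ez2 in E2. nra. }
  assert (0 <= l * (1 - l) * (v - u) * (dG a b P c2 - dG a b P c1)).
  { apply Rmult_le_pos; [|lra]. apply Rmult_le_pos; [|lra]. nra. }
  lra.
Qed.

Lemma Gf_convex u v l : 0 <= u -> 0 <= v -> 0 <= l <= 1 ->
  Gf a b P (l * u + (1 - l) * v) <= l * Gf a b P u + (1 - l) * Gf a b P v.
Proof.
  intros Hu Hv Hl.
  destruct (Req_dec l 0) as [->|Hl0].
  { replace (0 * u + (1 - 0) * v) with v by ring. lra. }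
  destruct (Req_dec l 1) as [->|Hl1].
  { replace (1 * u + (1 - 1) * v) with u by ring. lra. }
  destruct (Rtotal_order u v) as [H|[H|H]].
  - apply Gf_core; lra.
  - subst. replace (l * v + (1 - l) * v) with v by ring. lra.
  - pose proof (Gf_core v u (1 - l) Hv H ltac:(lra)).
    replace (l * u + (1 - l) * v) with ((1 - l) * v + (1 - (1 - l)) * u) by ring. lra.
Qed.

Lemma Gf_decr u1 u2 : 0 <= u1 -> u1 < u2 -> Gf a b P u2 < Gf a b P u1.
Proof.
  intros H1 H12. pose proof (s_ge1 u1 H1). pose proof (s_ge1 u2 ltac:(lra)).
  pose proof (exp_increasing _ _ H12). assert (0 < a * P) by nra.
  set (c := cc a b P) in *. set (s1 := 1 - c + c * exp u1) in *.
  set (s2 := 1 - c + c * exp u2) in *.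
  assert (0 < c * (exp u2 - exp u1)) by (apply Rmult_lt_0_compat; lra).
  assert (s1 < s2) by (unfold s1, s2; nra).
  unfold Gf. fold c.
  replace (1 - c + a * P + c * exp u1) with (s1 * (1 + a * P / s1)) by (unfold s1 in *; field; lra).
  replace (1 - c + a * P + c * exp u2) with (s2 * (1 + a * P / s2)) by (unfold s2 in *; field; lra).
  fold s1 s2.
  assert (0 < a * P / s1) by (apply Rdiv_lt_0_compat; lra).
  assert (0 < a * P / s2) by (apply Rdiv_lt_0_compat; lra).
  rewrite !ln_mult by lra.
  assert (a * P / s2 < a * P / s1).
  { unfold Rdiv; apply Rmult_lt_compat_l; [lra|]. apply Rinv_lt_contravar; nra. }
  pose proof (ln_increasing (1 + a * P / s2) (1 + a * P / s1) ltac:(lra) ltac:(lra)).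
  lra.
Qed.

Definition U t := ln (1 + a * t / (1 + b * P)).

Lemma U_nonneg t : 0 <= t -> 0 <= U t.
Proof.
  intros Ht. unfold U. rewrite <- ln_1. apply ln_le'; [lra|].
  assert (0 <= a * t / (1 + b * P)) by (apply Rmult_le_pos; [nra| left; apply Rinv_0_lt_compat; nra]).
  lra.
Qed.

Lemma G_U t : 0 <= t -> ln (1 + a * P / (1 + b * t)) = Gf a b P (U t).
Proof.
  intros Ht. unfold Gf, U.
  assert (0 <= a * t / (1 + b * P)) by (apply Rmult_le_pos; [nra| left; apply Rinv_0_lt_compat; nra]).
  rewrite exp_ln by lra. unfold cc.
  replace (1 - b * (1 + b * P) / a + a * P + b * (1 + b * P) / a * (1 + a * t / (1 + b * P)))
    with ((1 + b * t) * (1 + a * P / (1 + b * t))) by (field; repeat split; nra).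
  replace (1 - b * (1 + b * P) / a + b * (1 + b * P) / a * (1 + a * t / (1 + b * P)))
    with (1 + b * t) by (field; split; nra).
  assert (0 < a * P / (1 + b * t)) by (apply Rdiv_lt_0_compat; nra).
  rewrite ln_mult by nra. ring.
Qed.

End S.

Lemma ln2_pos : 0 < ln 2.
Proof. pose proof ln_lt_2. lra. Qed.

Theorem mainTheorem10 (a b Pmax : R) :
  0 < a -> 0 < b -> 0 < Pmax ->
  b >= sqrt (1 + a * Pmax) / Pmax ->
  Qsym a b Pmax <= 0 /\ Phi1_convex a b Pmax /\ Phi2_convex a b Pmax.
Proof.
  intros Ha Hb HP Hbig.
  assert (Hsq : 1 + a * Pmax <= (b * Pmax) ^ 2).
  { assert (sqrt (1 + a * Pmax) <= b * Pmax).
    { apply Rge_le in Hbig. apply (Rmult_le_compat_r Pmax) in Hbig; [|lra].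
      unfold Rdiv in Hbig. rewrite Rmult_assoc, Rinv_l in Hbig by lra. lra. }
    pose proof (sqrt_pos (1 + a * Pmax)).
    pose proof (sqrt_sqrt (1 + a * Pmax) ltac:(nra)). nra. }
  assert (Hth : a < theta b Pmax).
  { unfold theta. assert (a * Pmax < (b + b ^ 2 * Pmax) * Pmax) by nra. nra. }
  assert (Hc : 1 <= cc a b Pmax).
  { unfold cc. apply (Rmult_le_reg_r a); [lra|]. unfold Rdiv.
    rewrite Rmult_assoc, Rinv_l by lra. unfold theta in Hth. nra. }
  split; [|split].
  - unfold Qsym, re_csqrt. set (th := theta b Pmax) in *.
    assert (Hn : (if Rle_dec 0 ((a - th) * (a - th + a ^ 2 * Pmax))
                  then sqrt ((a - th) * (a - th + a ^ 2 * Pmax)) else 0) - th <= 0).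
    { destruct (Rle_dec _ _) as [H|H]; [|lra].
      assert (sqrt ((a - th) * (a - th + a ^ 2 * Pmax)) <= sqrt (th ^ 2)).
      { apply sqrt_le_1_alt. assert (0 < a ^ 2 * Pmax) by (apply Rmult_lt_0_compat; [apply pow_lt|]; lra).
        assert ((a - th) * (a ^ 2 * Pmax) <= 0) by nra.
        assert ((th - a) * (th - a) <= th * th) by nra. simpl in *; nra. }
      rewrite sqrt_pow2 in H0 by lra. lra. }
    unfold Rdiv. assert (0 < / (a * b)) by (apply Rinv_0_lt_compat; nra). nra.
  - intros p q s l Hp Hq Hs Hl Hx. unfold rate1, rate2, log2 in *.
    pose proof ln2_pos.
    rewrite !G_U in Hx by lra.
    assert (Hx' : Gf a b Pmax (U a b Pmax s) =
       l * Gf a b Pmax (U a b Pmax p) + (1 - l) * Gf a b Pmax (U a b Pmax q)).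
    { apply (Rmult_eq_reg_r (/ ln 2)); [ unfold Rdiv in Hx; lra | apply Rinv_neq_0_compat; lra ]. }
    fold (U a b Pmax s) (U a b Pmax p) (U a b Pmax q).
    assert (U a b Pmax s <= l * U a b Pmax p + (1 - l) * U a b Pmax q).
    { pose proof (U_nonneg a b Pmax Ha Hb HP p ltac:(lra)).
      pose proof (U_nonneg a b Pmax Ha Hb HP q ltac:(lra)).
      destruct (Rle_lt_dec (U a b Pmax s) (l * U a b Pmax p + (1 - l) * U a b Pmax q)) as [Hq1|Hq1]; auto.
      exfalso.
      pose proof (Gf_decr a b Pmax Ha HP Hc (l * U a b Pmax p + (1 - l) * U a b Pmax q) (U a b Pmax s) ltac:(apply Rplus_le_le_0_compat; apply Rmult_le_pos; lra) Hq1).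
      pose proof (Gf_convex a b Pmax Ha HP Hc _ _ l H0 H1 Hl). lra. }
    unfold Rdiv. assert (0 < / ln 2) by (apply Rinv_0_lt_compat; lra). nra.
  - intros p q s l Hp Hq Hs Hl Hx. unfold rate1, rate2, log2 in *.
    pose proof ln2_pos.
    rewrite !G_U by lra.
    fold (U a b Pmax s) (U a b Pmax p) (U a b Pmax q) in Hx.
    assert (Hx' : U a b Pmax s = l * U a b Pmax p + (1 - l) * U a b Pmax q).
    { apply (Rmult_eq_reg_r (/ ln 2)); [ unfold Rdiv in Hx; lra | apply Rinv_neq_0_compat; lra ]. }
    rewrite Hx'.
    pose proof (Gf_convex a b Pmax Ha HP Hc (U a b Pmax p) (U a b Pmax q) l
      (U_nonneg a b Pmax Ha Hb HP p ltac:(lra)) (U_nonneg a b Pmax Ha Hb HP q ltac:(lra)) Hl).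
    unfold Rdiv. assert (0 < / ln 2) by (apply Rinv_0_lt_compat; lra). nra.
Qed.
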